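(* Let $\Delta=0$ be a passive orthonomic system as described in the context, and let $\mathfrak{D}_K:\mathcal{B}\to\mathcal{B}$, $\mathfrak{D}_KP=\widetilde{D_KP}$, be the intrinsic multi-differential operators, with $\mathfrak{D}_i=\mathfrak{D}_{e_i}$. Then for every $K\in\mathbb{N}^p$, \[ \mathfrak{D}_K=\mathfrak{D}_1^{K_1}\mathfrak{D}_2^{K_2}\cdots\mathfrak{D}_p^{K_p}. \]
   Context: Jet space: coordinates $x_1,\dots,x_p$, $u^1,\dots,u^q$ and derivatives $u^j_K$, $K\in\mathbb{N}^p$ a multi-index; $e_i$ is the $i$-th unit multi-index. $\mathcal{A}$ is the ring of smooth functions of finitely many coordinates. Total derivatives $D_i=\partial/\partial x_i+\sum_{j,K}u^j_{K+e_i}\,\partial/\partial u^j_K$, $D_K=D_1^{K_1}\cdots D_p^{K_p}$. Choose $n$ pairs $(i^\alpha,J^\alpha)\in\{1,\dots,q\}\times\mathbb{N}^p$, $J^\alpha\neq0$. $u^j_K$ is principal if $(j,K)=(i^\alpha,J^\alpha+L)$ for some $\alpha,L$, otherwise parametric; $\mathcal{B}\subset\mathcal{A}$ consists of functions of the $x_i$ and parametric derivatives only. Fix a ranking $\le$: a total order on $\{1,\dots,q\}\times\mathbb{N}^p$ with $(j,K)\le(j,K+L)$ and $(i,J)\le(j,K)\iff(i,J+L)\le(j,K+L)$. The system is $u^{i^\alpha}_{J^\alpha}=P^\alpha$, $P^\alpha\in\mathcal{B}$, with $\Delta^\alpha=u^{i^\alpha}_{J^\alpha}-P^\alpha$; it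 is passive orthonomic if (i) $P^\alpha$ depends only on $u^j_K$ with $(j,K)<(i^\alpha,J^\alpha)$, and (ii) $(i^\alpha,J^\alpha+K)=(i^\beta,J^\beta+L)$ implies $D_KP^\alpha=D_LP^\beta$ (modulo the system). Then each $Q\in\mathcal{A}$ has a unique reduced form $\widetilde{Q}\in\mathcal{B}$ with $\widetilde{Q}\equiv Q$ modulo the differential ideal generated by the $\Delta^\alpha$ (obtained by repeatedly substituting $u^{i^\alpha}_{J^\alpha+L}\mapsto D_LP^\alpha$ for the highest principal derivative). *)

(* Defs.v *)
From HB Require Import structures.
From mathcomp Require Import all_boot all_order all_algebra.
From mathcomp Require Import boolp classical_sets reals topology normedtype derive.
From Stdlib Require Import ClassicalEpsilon.
Set Implicit Arguments. Unset Strict Implicit. Unset Printing Implicit Defensive.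
Import Order.TTheory GRing.Theory Num.Theory.
Import numFieldNormedType.Exports.
Local Open Scope ring_scope.

Notation mi p := {ffun 'I_p -> nat}.
Definition madd p (K L : mi p) : mi p := [ffun j => (K j + L j)%N].
Definition munit p (i : 'I_p) : mi p := [ffun j => nat_of_bool (j == i)].
Definition mzero p : mi p := [ffun => 0%N].

(* jet coordinates: inl i = x_i,  inr (j, K) = u^j_K *)
Notation Var p q := ('I_p + 'I_q * mi p)%type.
Notation jfun R p q := ((Var p q -> R) -> R).

Section Jet.
Variables (R : realType) (p q : nat).

Definition upd (z : Var p q -> R) (v : Var p q) (t : R) : Var p q -> R :=
  fun w => if w == v then t else z w.

Definition pd (v : Var p q) (F : jfun R p q) : jfun R p q :=
  fun z => derive1 (fun t => F (upd z v t)) (z v).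
Definition pds (vs : seq (Var p q)) (F : jfun R p q) : jfun R p q := foldr pd F vs.

Definition depends_on (S : seq (Var p q)) (F : jfun R p q) :=
  forall z z' : Var p q -> R, (forall w, w \in S -> z w = z' w) -> F z = F z'.

Definition Cinf (S : seq (Var p q)) (F : jfun R p q) :=
  depends_on S F /\ forall vs : seq (Var p q),
    (forall v (z : Var p q -> R), derivable (fun t => pds vs F (upd z v t)) (z v) 1) /\
    (forall (z : Var p q -> R) (e : R), 0 < e -> exists2 d : R, 0 < d &
       forall z' : Var p q -> R, (forall w, w \in S -> `|z' w - z w| < d) ->
         `|pds vs F z' - pds vs F z| < e).

Definition inA (F : jfun R p q) := exists S, Cinf S F.

(* a finite list of coordinates F depends on (for F in A) *)
Definition supp (F : jfun R p q) : seq (Var p q) :=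
  epsilon (inhabits [::]) (fun S => depends_on S F).

Definition tcoef (i : 'I_p) (v : Var p q) (z : Var p q -> R) : R :=
  match v with
  | inl _ => 0
  | inr (j, K) => z (inr (j, madd K (munit i)))
  end.

(* total derivative D_i = d/dx_i + sum u^j_{K+e_i} d/du^j_K *)
Definition Dtot (i : 'I_p) (F : jfun R p q) : jfun R p q :=
  fun z => pd (inl i) F z + \sum_(v <- undup (supp F)) tcoef i v z * pd v F z.

Definition Dmulti (K : mi p) (F : jfun R p q) : jfun R p q :=
  foldr (fun i G => iter (K i) (Dtot i) G) F (enum 'I_p).

Definition is_ranking (rk : 'I_q * mi p -> 'I_q * mi p -> Prop) :=
  (forall a, rk a a) /\
  (forall a b, rk a b -> rk b a -> a = b) /\
  (forall a b c, rk a b -> rk b c -> rk a c) /\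
  (forall a b, rk a b \/ rk b a) /\
  (forall j K L, rk (j, K) (j, madd K L)) /\
  (forall a b L, rk a b <-> rk (a.1, madd a.2 L) (b.1, madd b.2 L)).

Section System.
(* the system u^{idx a}_{J a} = P a, a < n *)
Variables (n : nat) (idx : 'I_n -> 'I_q) (J : 'I_n -> mi p) (P : 'I_n -> jfun R p q).

Definition principal (jk : 'I_q * mi p) :=
  exists (a : 'I_n) (L : mi p), jk = (idx a, madd (J a) L).

Definition parametric_var (v : Var p q) :=
  match v with inl _ => True | inr jk => ~ principal jk end.

Definition inB (F : jfun R p q) :=
  exists S, Cinf S F /\ forall w, w \in S -> parametric_var w.

Definition Delta (a : 'I_n) : jfun R p q := fun z => z (inr (idx a, J a)) - P a z.

Definition inI (F : jfun R p q) :=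
  exists (m : nat) (c : 'I_m -> jfun R p q) (L : 'I_m -> mi p) (a : 'I_m -> 'I_n),
    (forall k, inA (c k)) /\
    F = fun z => \sum_(k < m) c k z * Dmulti (L k) (Delta (a k)) z.

Definition passive_orthonomic (rk : 'I_q * mi p -> 'I_q * mi p -> Prop) :=
  [/\ is_ranking rk,
      (forall a, J a <> mzero p),
      (forall a, inB (P a)),
      (forall a, exists S, Cinf S (P a) /\ forall w, w \in S ->
         match w with
         | inl _ => True
         | inr jk => rk jk (idx a, J a) /\ jk <> (idx a, J a)
         end) &
      (forall a b K L, (idx a, madd (J a) K) = (idx b, madd (J b) L) ->
         inI (fun z => Dmulti K (P a) z - Dmulti L (P b) z))].

Definition is_reduced (Q Rf : jfun R p q) := inB Rf /\ inI (fun z => Q z - Rf z).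

Definition frakD (K : mi p) (F : jfun R p q) : jfun R p q :=
  epsilon (inhabits (fun _ => 0)) (is_reduced (Dmulti K F)).

End System.
End Jet.

(* Main.v *)
Require Import Defs.
From HB Require Import structures.
From mathcomp Require Import all_boot all_order all_algebra.
From mathcomp Require Import boolp classical_sets reals topology normedtype derive.
From mathcomp Require Import functions realfun.
From Stdlib Require Import ClassicalEpsilon.
From mathcomp Require Import ring lra.
Set Implicit Arguments. Unset Strict Implicit. Unset Printing Implicit Defensive.
Import Order.TTheory GRing.Theory Num.Theory.
Import numFieldNormedType.Exports.
Local Open Scope ring_scope.


Section J1.
Variables (R : realType) (p q : nat).
Local Notation V := (Var p q).
Local Notation F := (jfun R p q).

Lemma upd_same (z : V -> R) v : upd z v (z v) = z.
Proof. by apply/funext => w; rewrite /upd; case: eqP => [->|]. Qed.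
Lemma upd_upd (z : V -> R) v s t : upd (upd z v s) v t = upd z v t.
Proof. by apply/funext => w; rewrite /upd; case: eqP. Qed.
Lemma upd_eq (z : V -> R) v t : upd z v t v = t.
Proof. by rewrite /upd eqxx. Qed.
Lemma upd_neq (z : V -> R) v t w : w != v -> upd z v t w = z w.
Proof. by rewrite /upd => /negbTE ->. Qed.
Lemma upd_comm (z : V -> R) a b s t : a != b ->
  upd (upd z a s) b t = upd (upd z b t) a s.
Proof.
move=> ab; apply/funext => w; rewrite /upd.
case: (eqVneq w b) => [wb|wb]; case: (eqVneq w a) => [wa|wa] //.
by move: ab; rewrite -wa -wb eqxx.
Qed.

Definition dv v (H : F) := forall z, derivable (fun t => H (upd z v t)) (z v) 1.

Lemma dv_at v H : dv v H -> forall z t, derivable (fun t => H (upd z v t)) t 1.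
Proof.
move=> d z t; have := d (upd z v t); rewrite upd_eq.
by under eq_fun do rewrite upd_upd.
Qed.

Lemma pdE v (H : F) z : pd v H z = 'D_1 (fun t => H (upd z v t)) (z v).
Proof. by rewrite /pd derive1E. Qed.

Lemma pd_out S v (H : F) : depends_on S H -> v \notin S -> pd v H = fun _ => 0.
Proof.
move=> dep vS; apply/funext => z; rewrite /pd.
have -> : (fun t => H (upd z v t)) = cst (H z).
  apply/funext => t; apply: dep => w wS; rewrite upd_neq //.
  by apply: contraNneq vS => <-.
by rewrite derive1_cst.
Qed.

Lemma dep_mono S S' (H : F) : depends_on S H -> {subset S <= S'} -> depends_on S' H.
Proof. by move=> d sub z z' e; apply: d => w /sub; apply: e. Qed.

Lemma dep_pd S v (H : F) : depends_on S H -> depends_on S (pd v H).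
Proof.
move=> dep; case vS: (v \in S); last by rewrite (pd_out dep (negbT vS)).
move=> z z' e; rewrite /pd (e v vS).
have -> // : (fun t => H (upd z v t)) = (fun t => H (upd z' v t)).
apply/funext => t; apply: dep => w wS; rewrite /upd; case: eqP => // _.
exact: e.
Qed.

Lemma dep_pds S vs (H : F) : depends_on S H -> depends_on S (pds vs H).
Proof. by elim: vs => //= v vs IH d; apply: dep_pd; apply: IH. Qed.

Lemma dep_cst S (c : R) : depends_on S (fun _ : V -> R => c).
Proof. by []. Qed.

Lemma dep_add S S' (G H : F) : depends_on S G -> depends_on S' H ->
  depends_on (S ++ S') (fun z => G z + H z).
Proof.
move=> dG dH z z' e; rewrite (dG z z') ?(dH z z') // => w w1; apply: e;
  by rewrite mem_cat w1 ?orbT.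
Qed.

Lemma dep_mul S S' (G H : F) : depends_on S G -> depends_on S' H ->
  depends_on (S ++ S') (fun z => G z * H z).
Proof.
move=> dG dH z z' e; rewrite (dG z z') ?(dH z z') // => w w1; apply: e;
  by rewrite mem_cat w1 ?orbT.
Qed.

Lemma dep_opp S (G : F) : depends_on S G -> depends_on S (fun z => - G z).
Proof. by move=> dG z z' e; rewrite (dG z z'). Qed.

Lemma dep_coord w : depends_on [:: w] (fun z : V -> R => z w).
Proof. by move=> z z' e; apply: e; rewrite inE. Qed.

Lemma pd_add v (G H : F) : dv v G -> dv v H ->
  pd v (fun z => G z + H z) = fun z => pd v G z + pd v H z.
Proof.
move=> dG dH; apply/funext => z; rewrite !pdE.
have -> : (fun t => G (upd z v t) + H (upd z v t)) =
  ((fun t => G (upd z v t)) + (fun t => H (upd z v t)))%R by [].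
by rewrite deriveD //; try apply: dG; try apply: dH.
Qed.

Lemma pd_mul v (G H : F) : dv v G -> dv v H ->
  pd v (fun z => G z * H z) = fun z => pd v G z * H z + G z * pd v H z.
Proof.
move=> dG dH; apply/funext => z; rewrite !pdE.
have -> : (fun t => G (upd z v t) * H (upd z v t)) =
  ((fun t => G (upd z v t)) * (fun t => H (upd z v t)))%R by [].
rewrite deriveM //; try apply: dG; try apply: dH.
rewrite /= upd_same addrC; congr (_ + _); exact: mulrC.
Qed.

Lemma pd_opp v (G : F) : dv v G -> pd v (fun z => - G z) = fun z => - pd v G z.
Proof.
move=> dG; apply/funext => z; rewrite !pdE.
have -> : (fun t => - G (upd z v t)) = (- (fun t => G (upd z v t)))%R by [].
by rewrite deriveN //; try apply: dG.
Qed.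

Lemma pd_cst v (c : R) : pd v (fun _ : V -> R => c) = fun _ => 0.
Proof. by apply/funext => z; rewrite /pd derive1_cst. Qed.

Lemma pd_coord v w : pd v (fun z : V -> R => z w) = fun _ => (v == w)%:R.
Proof.
apply/funext => z; rewrite /pd; case: (eqVneq v w) => [->|vw].
  have -> : (fun t => upd z w t w) = id by apply/funext => t; rewrite upd_eq.
  by rewrite derive1E derive_id.
have -> : (fun t => upd z v t w) = cst (z w).
  by apply/funext => t; rewrite upd_neq // eq_sym.
by rewrite derive1_cst.
Qed.

Lemma dv_add v (G H : F) : dv v G -> dv v H -> dv v (fun z => G z + H z).
Proof.
move=> dG dH z.
have -> : (fun t => G (upd z v t) + H (upd z v t)) =
  ((fun t => G (upd z v t)) + (fun t => H (upd z v t)))%R by [].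
by apply: derivableD; [apply: dG | apply: dH].
Qed.

Lemma dv_mul v (G H : F) : dv v G -> dv v H -> dv v (fun z => G z * H z).
Proof.
move=> dG dH z.
have -> : (fun t => G (upd z v t) * H (upd z v t)) =
  ((fun t => G (upd z v t)) * (fun t => H (upd z v t)))%R by [].
by apply: derivableM; [apply: dG | apply: dH].
Qed.

Lemma dv_opp v (G : F) : dv v G -> dv v (fun z => - G z).
Proof.
move=> dG z.
have -> : (fun t => - G (upd z v t)) = (- (fun t => G (upd z v t)))%R by [].
by apply: derivableN; apply: dG.
Qed.

Lemma dv_cst v (c : R) : dv v (fun _ : V -> R => c).
Proof. by move=> z; apply: derivable_cst. Qed.

Lemma dv_coord v w : dv v (fun z : V -> R => z w).
Proof.
move=> z; case: (eqVneq v w) => [->|vw].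
  have -> : (fun t => upd z w t w) = id by apply/funext => t; rewrite upd_eq.
  exact: derivable_id.
have -> : (fun t => upd z v t w) = cst (z w).
  by apply/funext => t; rewrite upd_neq // eq_sym.
exact: derivable_cst.
Qed.

End J1.
Arguments dv_add {R p q v G H} _ _ _ _ _.
Arguments dv_mul {R p q v G H} _ _ _ _ _.
Arguments dv_opp {R p q v G} _ _ _ _.
Arguments dv_cst {R p q v} c _ _ _.
Arguments dv_coord {R p q} v w _ _ _.


Section J2.
Variables (R : realType) (p q : nat).
Local Notation V := (Var p q).
Local Notation F := (jfun R p q).
Implicit Types (S : seq V) (G H : F).

Definition cont (S : seq V) (H : F) := forall (z : V -> R) (e : R), 0 < e -> exists2 d : R, 0 < d &
       forall z' : V -> R, (forall w, w \in S -> `|z' w - z w| < d) -> `|H z' - H z| < e.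

Lemma cont_mono S S' H : cont S H -> {subset S <= S'} -> cont S' H.
Proof.
move=> c sub z e e0; have [d d0 hd] := c z e e0; exists d => // z' h.
by apply: hd => w /sub; apply: h.
Qed.

Lemma cont_cst S (c : R) : cont S (fun _ => c).
Proof. by move=> z e e0; exists 1 => // z' _; rewrite subrr normr0. Qed.

Lemma cont_coord S w : w \in S -> cont S (fun z : V -> R => z w).
Proof. by move=> wS z e e0; exists e => // z' h; apply: h. Qed.

Lemma cont_opp S H : cont S H -> cont S (fun z => - H z).
Proof.
move=> c z e e0; have [d d0 hd] := c z e e0; exists d => // z' h.
by rewrite -opprD normrN; apply: hd.
Qed.

Lemma cont_add S G H : cont S G -> cont S H -> cont S (fun z => G z + H z).
Proof.
move=> cG cH z e e0.
have e2 : 0 < e / 2 by rewrite divr_gt0.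
have [d1 d10 h1] := cG z _ e2; have [d2 d20 h2] := cH z _ e2.
exists (Num.min d1 d2); first by rewrite lt_min d10 d20.
move=> z' h.
have -> : G z' + H z' - (G z + H z) = (G z' - G z) + (H z' - H z) by ring.
apply: (le_lt_trans (ler_normD _ _)).
have a1 : `|G z' - G z| < e / 2 by apply: h1 => w wS; have := h w wS; rewrite lt_min => /andP[].
have a2 : `|H z' - H z| < e / 2 by apply: h2 => w wS; have := h w wS; rewrite lt_min => /andP[].
lra.
Qed.

Lemma cont_mul S G H : cont S G -> cont S H -> cont S (fun z => G z * H z).
Proof.
move=> cG cH z e e0.
set A := `|G z|; set B := `|H z|.
have A0 : 0 <= A by apply: normr_ge0.
have B0 : 0 <= B by apply: normr_ge0.
have e1 : 0 < Num.min 1 (e / (2 * (B + 1))).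
  by rewrite lt_min ltr01 /= divr_gt0 // mulr_gt0 // ltr_wpDl.
have e2 : 0 < e / (2 * (A + 1)) by rewrite divr_gt0 // mulr_gt0 // ltr_wpDl.
have [d1 d10 h1] := cG z _ e1; have [d2 d20 h2] := cH z _ e2.
exists (Num.min d1 d2); first by rewrite lt_min d10 d20.
move=> z' h.
have a1 : `|G z' - G z| < Num.min 1 (e / (2 * (B + 1))).
  by apply: h1 => w wS; have := h w wS; rewrite lt_min => /andP[].
have a2 : `|H z' - H z| < e / (2 * (A + 1)).
  by apply: h2 => w wS; have := h w wS; rewrite lt_min => /andP[].
move: a1; rewrite lt_min => /andP[x1 x2].
set x := `|G z' - G z| in x1 x2; set y := `|H z' - H z| in a2.
have x0 : 0 <= x by apply: normr_ge0.
have y0 : 0 <= y by apply: normr_ge0.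
have X : x * (2 * (B + 1)) < e by rewrite -ltr_pdivlMr // mulr_gt0 // ltr_wpDl.
have Y : y * (2 * (A + 1)) < e by rewrite -ltr_pdivlMr // mulr_gt0 // ltr_wpDl.
have xy : x * y <= y by rewrite ler_piMl // ltW.
have -> : G z' * H z' - G z * H z =
  (G z' - G z) * (H z' - H z) + G z * (H z' - H z) + H z * (G z' - G z) by ring.
apply: (le_lt_trans (ler_normD _ _)); rewrite !normrM -/x -/y -/A -/B.
apply: (le_lt_trans (lerD (ler_normD _ _) (lexx _))); rewrite !normrM -/x -/y -/A -/B.
nra.
Qed.

Definition basic S (H : F) := (forall v, dv v H) /\ cont S H.

Lemma basic_add S G H : basic S G -> basic S H -> basic S (fun z => G z + H z).
Proof. by move=> [dG cG] [dH cH]; split; [move=> v; apply: dv_add | apply: cont_add]. Qed.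
Lemma basic_mul S G H : basic S G -> basic S H -> basic S (fun z => G z * H z).
Proof. by move=> [dG cG] [dH cH]; split; [move=> v; apply: dv_mul | apply: cont_mul]. Qed.
Lemma basic_opp S G : basic S G -> basic S (fun z => - G z).
Proof. by move=> [dG cG]; split; [move=> v; apply: dv_opp | apply: cont_opp]. Qed.
Lemma basic_cst S (c : R) : basic S (fun _ : V -> R => c).
Proof. by split; [move=> v; apply: dv_cst | apply: cont_cst]. Qed.

Lemma CinfP S (H : F) : Cinf S H <-> depends_on S H /\ forall vs, basic S (pds vs H).
Proof.
by split=> [[d h]|[d h]]; split=> // vs; have [h1 h2] := h vs.
Qed.

Lemma pds_rcons vs v (H : F) : pds (rcons vs v) H = pds vs (pd v H).
Proof. by rewrite /pds foldr_rcons. Qed.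

Lemma pds_add vs (G H : F) :
  (forall ws u, (size ws < size vs)%N -> dv u (pds ws G) /\ dv u (pds ws H)) ->
  pds vs (fun z => G z + H z) = fun z => pds vs G z + pds vs H z.
Proof.
elim: vs => //= v vs IH h.
rewrite IH; last by move=> ws u s; apply: h; rewrite ltnS ltnW.
by have [] := h vs v (ltnSn _) => d1 d2; rewrite pd_add.
Qed.

Lemma pds_opp vs (G : F) :
  (forall ws u, (size ws < size vs)%N -> dv u (pds ws G)) ->
  pds vs (fun z => - G z) = fun z => - pds vs G z.
Proof.
elim: vs => //= v vs IH h.
rewrite IH; last by move=> ws u s; apply: h; rewrite ltnS ltnW.
by rewrite pd_opp //; apply: h.
Qed.

Lemma pds_cst vs (c : R) : pds vs (fun _ : V -> R => c) =
  fun _ => if vs is [::] then c else 0.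
Proof. by elim: vs => //= v vs ->; case: vs => *; rewrite pd_cst. Qed.

Lemma Cinf_mono S S' H : Cinf S H -> {subset S <= S'} -> Cinf S' H.
Proof.
move=> /CinfP [d h] sub; apply/CinfP; split; first exact: dep_mono sub.
by move=> vs; have [h1 h2] := h vs; split=> //; apply: cont_mono sub.
Qed.

Lemma Cinf_cst S (c : R) : Cinf S (fun _ : V -> R => c).
Proof. by apply/CinfP; split=> // vs; rewrite pds_cst; case: vs => *; apply: basic_cst. Qed.

Lemma Cinf_coord w : Cinf [:: w] (fun z : V -> R => z w).
Proof.
apply/CinfP; split; first exact: dep_coord.
case/lastP=> [|vs u]; first by split; [move=> v; apply: dv_coord | apply: cont_coord; rewrite inE].
by rewrite pds_rcons pd_coord pds_cst; case: vs => *; apply: basic_cst.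
Qed.

Lemma Cinf_pd S v H : Cinf S H -> Cinf S (pd v H).
Proof.
move=> /CinfP [d h]; apply/CinfP; split; first exact: dep_pd.
by move=> vs; rewrite -pds_rcons.
Qed.

Lemma Cinf_dv S v H : Cinf S H -> dv v H.
Proof. by move=> /CinfP [_ h]; have [] := h [::]. Qed.

Lemma Cinf_add S G H : Cinf S G -> Cinf S H -> Cinf S (fun z => G z + H z).
Proof.
move=> /CinfP [dG hG] /CinfP [dH hH]; apply/CinfP; split.
  by apply: dep_mono (dep_add dG dH) _ => w; rewrite mem_cat orbb.
move=> vs; rewrite pds_add; first by apply: basic_add.
by move=> ws u _; split; [case: (hG ws) | case: (hH ws)].
Qed.

Lemma Cinf_opp S G : Cinf S G -> Cinf S (fun z => - G z).
Proof.
move=> /CinfP [dG hG]; apply/CinfP; split; first exact: dep_opp.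
by move=> vs; rewrite pds_opp; [apply: basic_opp | move=> ws u _; case: (hG ws)].
Qed.

Lemma Cinf_mul S G H : Cinf S G -> Cinf S H -> Cinf S (fun z => G z * H z).
Proof.
move=> CG CH; apply/CinfP; split.
  case/CinfP: CG => dG _; case/CinfP: CH => dH _.
  by apply: dep_mono (dep_mul dG dH) _ => w; rewrite mem_cat orbb.
suff: forall n G H, Cinf S G -> Cinf S H -> forall vs, (size vs <= n)%N ->
    basic S (pds vs (fun z => G z * H z)) by move=> h vs; apply: (h (size vs) G H CG CH).
clear CG CH; elim=> [|n IH] {}G {}H CG' CH' vs.
  case: vs => // _; case/CinfP: CG' => _ hG; case/CinfP: CH' => _ hH.
  by apply: basic_mul; [apply: (hG [::]) | apply: (hH [::])].
case/lastP: vs => [|vs v].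
  by move=> _; apply: (IH G H CG' CH' [::]).
rewrite size_rcons ltnS => sz.
rewrite pds_rcons pd_mul; [|exact: Cinf_dv CG'|exact: Cinf_dv CH'].
rewrite pds_add.
  apply: basic_add.
    exact: (IH (pd v G) H (Cinf_pd v CG') CH' vs sz).
  exact: (IH G (pd v H) CG' (Cinf_pd v CH') vs sz).
move=> ws u s; split.
  by case: (IH (pd v G) H (Cinf_pd v CG') CH' ws (leq_trans (ltnW s) sz)).
by case: (IH G (pd v H) CG' (Cinf_pd v CH') ws (leq_trans (ltnW s) sz)).
Qed.

Lemma inA_mono2 (G H : F) : inA G -> inA H -> exists S, Cinf S G /\ Cinf S H.
Proof.
move=> [S1 C1] [S2 C2]; exists (S1 ++ S2); split.
  by apply: Cinf_mono C1 _ => w w1; rewrite mem_cat w1.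
by apply: Cinf_mono C2 _ => w w1; rewrite mem_cat w1 orbT.
Qed.

Lemma inA_add G H : inA G -> inA H -> inA (fun z => G z + H z).
Proof. by move=> a b; have [S [C1 C2]] := inA_mono2 a b; exists S; apply: Cinf_add. Qed.
Lemma inA_mul G H : inA G -> inA H -> inA (fun z => G z * H z).
Proof. by move=> a b; have [S [C1 C2]] := inA_mono2 a b; exists S; apply: Cinf_mul. Qed.
Lemma inA_opp G : inA G -> inA (fun z => - G z).
Proof. by move=> [S C]; exists S; apply: Cinf_opp. Qed.
Lemma inA_sub G H : inA G -> inA H -> inA (fun z => G z - H z).
Proof. by move=> a b; apply: inA_add => //; apply: inA_opp. Qed.
Lemma inA_cst (c : R) : inA (fun _ : V -> R => c).
Proof. by exists [::]; apply: Cinf_cst. Qed.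
Lemma inA_coord w : inA (fun z : V -> R => z w).
Proof. by exists [:: w]; apply: Cinf_coord. Qed.
Lemma inA_pd v H : inA H -> inA (pd v H).
Proof. by move=> [S C]; exists S; apply: Cinf_pd. Qed.
Lemma inA_dv v H : inA H -> dv v H.
Proof. by move=> [S C]; apply: Cinf_dv C. Qed.
Lemma inA_big (I : Type) (s : seq I) (h : I -> F) : (forall i, inA (h i)) ->
  inA (fun z => \sum_(i <- s) h i z).
Proof.
move=> hA; elim: s => [|i s IH].
  by under eq_fun do rewrite big_nil; apply: inA_cst.
by under eq_fun do rewrite big_cons; apply: inA_add.
Qed.

Lemma inA_dep H : inA H -> depends_on (supp H) H.
Proof.
move=> [S /CinfP [d _]]; rewrite /supp.
exact: (epsilon_spec (inhabits [::]) (fun S => depends_on S H) (ex_intro _ S d)).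
Qed.

End J2.


Section J3.
Variables (R : realType) (p q : nat).
Local Notation V := (Var p q).
Local Notation F := (jfun R p q).
Implicit Types (S : seq V) (G H : F).

Lemma is_derive_pd v H (z : V -> R) (t : R) : dv v H ->
  is_derive t 1 (fun s => H (upd z v s)) (pd v H (upd z v t)).
Proof.
move=> d; have := dv_at (z:=z) (t:=t) d => /derivableP.
rewrite pdE upd_eq.
by have -> : (fun s => H (upd (upd z v t) v s)) = (fun s => H (upd z v s))
  by apply/funext => s; rewrite upd_upd.
Qed.

Lemma MVT_pd v H (z : V -> R) (a b : R) : dv v H -> a < b ->
  exists2 c, a < c < b & H (upd z v b) - H (upd z v a) = pd v H (upd z v c) * (b - a).
Proof.
move=> d ab.
have [c cab e] := @MVT R (fun s => H (upd z v s)) (fun t => pd v H (upd z v t)) a b ab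
  (fun x _ => @is_derive_pd v H z x d)
  (derivable_within_continuous (fun x _ => dv_at (z:=z) (t:=x) d)).
by exists c => //; move: cab; rewrite in_itv.
Qed.

Lemma pd_shift (a b : V) (c : R) H : a != b -> dv a H ->
  pd a (fun w => H (upd w b c)) = fun w => pd a H (upd w b c).
Proof.
move=> ab d; apply/funext => w; rewrite !pdE upd_neq //.
by have -> : (fun t => H (upd (upd w a t) b c)) = (fun t => H (upd (upd w b c) a t))
  by apply/funext => t; rewrite upd_comm.
Qed.

Lemma dv_shift (a b : V) (c : R) H : a != b -> dv a H -> dv a (fun w => H (upd w b c)).
Proof.
move=> ab d w; have := d (upd w b c); rewrite upd_neq //.
by have -> : (fun t => H (upd (upd w a t) b c)) = (fun t => H (upd (upd w b c) a t))
  by apply/funext => t; rewrite upd_comm.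
Qed.

Lemma zero_small (x : R) : (forall e, 0 < e -> `|x| < e + e) -> x = 0.
Proof.
move=> h; apply/eqP; apply/negPn/negP => x0.
have := h (`|x| / 2); rewrite divr_gt0 ?normr_gt0 // => /(_ isT).
lra.
Qed.

Lemma itv_dist (x c d : R) : x < c -> c < x + d -> `|c - x| < d.
Proof. by move=> h1 h2; rewrite ger0_norm; lra. Qed.

Lemma schwarz S H a b : Cinf S H -> pd a (pd b H) = pd b (pd a H).
Proof.
move=> C; case: (eqVneq a b) => [->//|ab].
case/CinfP: (C) => dep hC.
case aS: (a \in S); last first.
  rewrite (pd_out dep (negbT aS)) pd_cst.
  by rewrite (pd_out (dep_pd b dep) (negbT aS)).
case bS: (b \in S); last first.
  rewrite (pd_out dep (negbT bS)) pd_cst.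
  by rewrite (pd_out (dep_pd a dep) (negbT bS)).
have dH : forall v, dv v H by move=> v; case: (hC [::]).
have dHa : forall v, dv v (pd a H) by move=> v; case: (hC [:: a]).
have dHb : forall v, dv v (pd b H) by move=> v; case: (hC [:: b]).
have ba : b != a by rewrite eq_sym.
apply/funext => z; apply/eqP; rewrite -subr_eq0; apply/eqP; apply: zero_small => e e0.
have [d1 d10 h1] := (hC [:: b; a]).2 z e e0.
have [d2 d20 h2] := (hC [:: a; b]).2 z e e0.
set dl := Num.min d1 d2.
have dl0 : 0 < dl by rewrite lt_min d10 d20.
set x0 := z a; set y0 := z b.
pose G1 := fun w => H (upd w b (y0 + dl)) + - H w.
have dG1 : dv a G1 by apply: dv_add; [apply: dv_shift | apply: dv_opp].
have [xi /andP[xi1 xi2] E1] := MVT_pd z dG1 (ltr_pwDr dl0 (lexx x0)).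
have pG1 : pd a G1 = fun w => pd a H (upd w b (y0 + dl)) + - pd a H w.
  by rewrite /G1 (pd_add (dv_shift ab (dH a)) (dv_opp (dH a))) (pd_shift _ ab (dH a)) (pd_opp (dH a)).
rewrite pG1 in E1.
pose z1 := upd z a xi.
have [eta /andP[eta1 eta2] E1'] := MVT_pd z1 (dHa b) (ltr_pwDr dl0 (lexx y0)).
have z1b : upd z1 b y0 = z1 by rewrite /z1 /y0 -(upd_neq z xi ba) upd_same.
rewrite z1b in E1'.
have key : forall (P U1 U2 A d x0 y0 : R), P = (U1 + - U2) * (x0 + d - x0) ->
    U1 - U2 = A * (y0 + d - y0) -> P = A * (d * d).
  by move=> P U1 U2 A d x y -> ->; ring.
pose Phi := H (upd (upd z a (x0 + dl)) b (y0 + dl)) - H (upd z a (x0 + dl))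
  - H (upd z b (y0 + dl)) + H z.
have Phi1 : Phi = pd b (pd a H) (upd z1 b eta) * (dl * dl).
  have e1 : Phi = G1 (upd z a (x0 + dl)) - G1 (upd z a x0).
    by rewrite /Phi /G1 /x0 upd_same; ring.
  by rewrite e1; apply: (key _ _ _ _ _ _ _ E1 E1').
pose G2 := fun w => H (upd w a (x0 + dl)) + - H w.
have dG2 : dv b G2 by apply: dv_add; [apply: dv_shift | apply: dv_opp].
have [xi' /andP[xi1' xi2'] E2] := MVT_pd z dG2 (ltr_pwDr dl0 (lexx y0)).
have pG2 : pd b G2 = fun w => pd b H (upd w a (x0 + dl)) + - pd b H w.
  by rewrite /G2 (pd_add (dv_shift ba (dH b)) (dv_opp (dH b))) (pd_shift _ ba (dH b)) (pd_opp (dH b)).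
rewrite pG2 in E2.
pose z2 := upd z b xi'.
have [eta' /andP[eta1' eta2'] E2'] := MVT_pd z2 (dHb a) (ltr_pwDr dl0 (lexx x0)).
have z2a : upd z2 a x0 = z2 by rewrite /z2 /x0 -(upd_neq z xi' ab) upd_same.
rewrite z2a in E2'.
have Phi2 : Phi = pd a (pd b H) (upd z2 a eta') * (dl * dl).
  have e2 : Phi = G2 (upd z b (y0 + dl)) - G2 (upd z b y0).
    by rewrite /Phi /G2 /y0 upd_same upd_comm //; ring.
  by rewrite e2; apply: (key _ _ _ _ _ _ _ E2 E2').
have EQ : pd b (pd a H) (upd z1 b eta) = pd a (pd b H) (upd z2 a eta').
  apply: (mulIf (x := dl * dl)); first by rewrite mulf_neq0 // gt_eqF.
  exact: (etrans (esym Phi1) Phi2).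
have hd1 : dl <= d1 by rewrite /dl ge_min lexx.
have hd2 : dl <= d2 by rewrite /dl ge_min lexx orbT.
have dist : forall (s t : R) w, `|s - z a| < dl -> `|t - z b| < dl ->
    `|upd (upd z a s) b t w - z w| < dl.
  move=> s t w hs ht; rewrite /upd; case: (eqVneq w b) => [->//|wb].
  by case: (eqVneq w a) => [->//|wa]; rewrite subrr normr0.
have dist2 : forall (s t : R) w, `|s - z a| < dl -> `|t - z b| < dl ->
    `|upd (upd z b t) a s w - z w| < dl.
  move=> s t w hs ht; rewrite /upd; case: (eqVneq w a) => [->//|wa].
  by case: (eqVneq w b) => [->//|wb]; rewrite subrr normr0.
have c1 : `|pd b (pd a H) (upd z1 b eta) - pd b (pd a H) z| < e.
  apply: h1 => w _; apply: (lt_le_trans _ hd1); apply: dist.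
    exact: itv_dist xi1 xi2.
  exact: itv_dist eta1 eta2.
have c2 : `|pd a (pd b H) (upd z2 a eta') - pd a (pd b H) z| < e.
  apply: h2 => w _; apply: (lt_le_trans _ hd2).
  apply: dist2.
    exact: itv_dist eta1' eta2'.
  exact: itv_dist xi1' xi2'.
have alg : forall A1 A0 B1 B0 : R, A1 = B1 -> `|B0 - A0| <= `|A1 - A0| + `|B1 - B0|.
  move=> A1 A0 B1 B0 ->.
  have -> : B0 - A0 = (B1 - A0) - (B1 - B0) by ring.
  exact: ler_normB.
exact: (le_lt_trans (alg _ _ _ _ EQ) (ltrD c1 c2)).
Qed.

End J3.


Section J4.
Variables (R : realType) (p q : nat).
Local Notation V := (Var p q).
Local Notation F := (jfun R p q).
Implicit Types (S T : seq V) (G H : F).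

Lemma sum_supp S T1 T2 (f : V -> R) : (forall v, v \notin S -> f v = 0) ->
  {subset S <= T1} -> {subset S <= T2} -> uniq T1 -> uniq T2 ->
  \sum_(v <- T1) f v = \sum_(v <- T2) f v.
Proof.
move=> f0 s1 s2 u1 u2.
rewrite -(@big_rmcond _ _ _ _ T1 (mem S) f); last by move=> v /f0.
rewrite -(@big_rmcond _ _ _ _ T2 (mem S) f); last by move=> v /f0.
rewrite -(big_filter T1) -(big_filter T2).
have P : perm_eq [seq x <- T1 | x \in S] [seq x <- T2 | x \in S].
  apply: uniq_perm; rewrite ?filter_uniq //.
  move=> v; rewrite !mem_filter; case vS: (v \in S) => //=.
  by rewrite s1 ?s2.
exact: (perm_big _ P).
Qed.

Definition tcf i v : F := fun z => tcoef i v z.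

Definition DT i T H : F := fun z => pd (inl i) H z + \sum_(v <- T) tcf i v z * pd v H z.

Lemma Dtot_any i S T H : inA H -> depends_on S H -> uniq T -> {subset S <= T} ->
  Dtot i H = DT i T H.
Proof.
move=> hA dep uT sT; apply/funext => z; rewrite /Dtot /DT; congr (_ + _).
have dep2 := inA_dep hA.
apply: (sum_supp (S := [seq v <- S | v \in supp H])).
- move=> v; rewrite mem_filter negb_and => /orP[] vS.
    by rewrite (pd_out dep2 vS) mulr0.
  by rewrite (pd_out dep vS) mulr0.
- by move=> v; rewrite mem_filter mem_undup => /andP[].
- by move=> v; rewrite mem_filter => /andP[_ /sT].
- exact: undup_uniq.
- exact: uT.
Qed.

Lemma inA_tcf i v : inA (tcf i v).
Proof. by case: v => [k|[j K]]; rewrite /tcf /=; [apply: inA_cst | apply: inA_coord]. Qed.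

Lemma dep_tcf i v : depends_on (if v is inr (j, K) then [:: inr (j, madd K (munit i))] else [::]) (tcf i v).
Proof. by case: v => [k|[j K]] //; apply: dep_coord. Qed.

Lemma sum_nil_fun (I : Type) (h : I -> F) :
  (fun z => \sum_(k <- [::]) h k z) = fun _ => 0.
Proof. by apply/funext => z; rewrite big_nil. Qed.
Lemma sum_cons_fun (I : Type) x (s : seq I) (h : I -> F) :
  (fun z => \sum_(k <- x :: s) h k z) = fun z => h x z + \sum_(k <- s) h k z.
Proof. by apply/funext => z; rewrite big_cons. Qed.

Lemma dv_sum u (I : Type) (s : seq I) (h : I -> F) : (forall k, dv u (h k)) ->
  dv u (fun z => \sum_(k <- s) h k z).
Proof.
move=> d; elim: s => [|k s IH]; first by rewrite sum_nil_fun; apply: dv_cst.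
by rewrite sum_cons_fun; exact: (dv_add (d k) IH).
Qed.

Lemma pd_sum u (I : Type) (s : seq I) (h : I -> F) : (forall k, dv u (h k)) ->
  pd u (fun z => \sum_(k <- s) h k z) = fun z => \sum_(k <- s) pd u (h k) z.
Proof.
move=> d; elim: s => [|k s IH]; first by rewrite !sum_nil_fun pd_cst.
rewrite !sum_cons_fun pd_add //; last exact: dv_sum.
by rewrite IH.
Qed.

Lemma dep_sum S (I : Type) (s : seq I) (h : I -> F) : (forall k, depends_on S (h k)) ->
  depends_on S (fun z => \sum_(k <- s) h k z).
Proof.
move=> d z z' e; apply: eq_bigr => k _; exact: d.
Qed.

Lemma inA_DT i T H : inA H -> inA (DT i T H).
Proof.
move=> hA; apply: inA_add; first exact: inA_pd.
apply: inA_big => v; apply: inA_mul; [exact: inA_tcf | exact: inA_pd].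
Qed.

Lemma inA_Dtot i H : inA H -> inA (Dtot i H).
Proof. by move=> hA; have -> : Dtot i H = DT i (undup (supp H)) H by []; apply: inA_DT. Qed.

Lemma dv_A u H : inA H -> dv u H.
Proof. exact: inA_dv. Qed.

Lemma DT_add i T G H : inA G -> inA H ->
  DT i T (fun z => G z + H z) = fun z => DT i T G z + DT i T H z.
Proof.
move=> aG aH; apply/funext => z; rewrite /DT.
rewrite (eq_bigr (fun v => tcf i v z * pd v G z + tcf i v z * pd v H z)); last first.
  by move=> v _; rewrite pd_add ?mulrDr //; apply: dv_A.
rewrite big_split /= pd_add; try exact: dv_A.
ring.
Qed.

Lemma DT_mul i T G H : inA G -> inA H ->
  DT i T (fun z => G z * H z) = fun z => DT i T G z * H z + G z * DT i T H z.
Proof.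
move=> aG aH; apply/funext => z; rewrite /DT.
rewrite (eq_bigr (fun v => tcf i v z * pd v G z * H z + G z * (tcf i v z * pd v H z))); last first.
  by move=> v _; rewrite pd_mul; try exact: dv_A; ring.
rewrite big_split /= -big_distrl -big_distrr /= pd_mul; try exact: dv_A.
ring.
Qed.

Lemma DT_opp i T G : inA G -> DT i T (fun z => - G z) = fun z => - DT i T G z.
Proof.
move=> aG; apply/funext => z; rewrite /DT.
rewrite (eq_bigr (fun v => - (tcf i v z * pd v G z))); last first.
  by move=> v _; rewrite pd_opp ?mulrN //; apply: dv_A.
rewrite sumrN pd_opp; last exact: dv_A.
ring.
Qed.

Lemma inA_ex2 G H : inA G -> inA H -> exists S, depends_on S G /\ depends_on S H.
Proof.
move=> a b; have [S [/CinfP [d1 _] /CinfP [d2 _]]] := inA_mono2 a b; by exists S.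
Qed.

Lemma inA_ex G : inA G -> exists S, depends_on S G.
Proof. by move=> [S /CinfP [d _]]; exists S. Qed.

Lemma Dtot_add i G H : inA G -> inA H ->
  Dtot i (fun z => G z + H z) = fun z => Dtot i G z + Dtot i H z.
Proof.
move=> aG aH; have [S [dG dH]] := inA_ex2 aG aH.
have sub : {subset S <= undup S} by move=> v; rewrite mem_undup.
rewrite (Dtot_any _ aG dG (undup_uniq S) sub) (Dtot_any _ aH dH (undup_uniq S) sub).
have sub2 : {subset S ++ S <= undup S} by move=> v; rewrite mem_cat orbb mem_undup.
by rewrite (Dtot_any i (inA_add aG aH) (dep_add dG dH) (undup_uniq S) sub2) DT_add.
Qed.

Lemma Dtot_mul i G H : inA G -> inA H ->
  Dtot i (fun z => G z * H z) = fun z => Dtot i G z * H z + G z * Dtot i H z.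
Proof.
move=> aG aH; have [S [dG dH]] := inA_ex2 aG aH.
have sub : {subset S <= undup S} by move=> v; rewrite mem_undup.
rewrite (Dtot_any _ aG dG (undup_uniq S) sub) (Dtot_any _ aH dH (undup_uniq S) sub).
have sub2 : {subset S ++ S <= undup S} by move=> v; rewrite mem_cat orbb mem_undup.
by rewrite (Dtot_any i (inA_mul aG aH) (dep_mul dG dH) (undup_uniq S) sub2) DT_mul.
Qed.

Lemma Dtot_opp i G : inA G -> Dtot i (fun z => - G z) = fun z => - Dtot i G z.
Proof.
move=> aG; have [S dG] := inA_ex aG.
have sub : {subset S <= undup S} by move=> v; rewrite mem_undup.
rewrite (Dtot_any _ aG dG (undup_uniq S) sub).
by rewrite (Dtot_any _ (inA_opp aG) (dep_opp dG) (undup_uniq S) sub) DT_opp.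
Qed.

Lemma Dtot_cst i (c : R) : Dtot i (fun _ : V -> R => c) = fun _ => 0.
Proof.
rewrite (Dtot_any i (inA_cst _ _ c) (@dep_cst R p q [::] c) (T := [::])) //.
by apply/funext => z; rewrite /DT big_nil pd_cst addr0.
Qed.

Lemma ord0_fun (h : 'I_0 -> F) : (fun z => \sum_(k < 0) h k z) = fun _ => 0.
Proof. by apply/funext => z; rewrite big_ord0. Qed.
Lemma ordS_fun m (h : 'I_m.+1 -> F) : (fun z => \sum_(k < m.+1) h k z) =
  fun z => \sum_(k < m) h (widen_ord (leqnSn m) k) z + h ord_max z.
Proof. by apply/funext => z; rewrite big_ord_recr. Qed.

Lemma Dtot_sum i m (h : 'I_m -> F) : (forall k, inA (h k)) ->
  Dtot i (fun z => \sum_(k < m) h k z) = fun z => \sum_(k < m) Dtot i (h k) z.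
Proof.
elim: m h => [|m IH] h hA; first by rewrite !ord0_fun Dtot_cst.
rewrite !ordS_fun Dtot_add //; last by apply: inA_big.
by rewrite (IH (fun k => h (widen_ord (leqnSn m) k))).
Qed.

End J4.


Section J5.
Variables (R : realType) (p q : nat).
Local Notation V := (Var p q).
Local Notation F := (jfun R p q).
Implicit Types (S T : seq V) (G H : F).

Definition sh (i : 'I_p) (v : V) : V :=
  match v with inl k => inl k | inr (j, K) => inr (j, madd K (munit i)) end.
Definition isr (v : V) := if v is inr _ then true else false.

Lemma tcf_sh i j v : tcf (R:=R) i (sh j v) = tcf j (sh i v).
Proof.
case: v => [k|[jj K]]; apply/funext => z; rewrite /tcf //=.
congr (z (inr (jj, _))); apply/ffunP => x; by rewrite !ffunE addnAC.
Qed.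

Lemma pd_tcf u j w : pd u (tcf (R:=R) j w) = fun _ => (isr w && (u == sh j w))%:R.
Proof.
case: w => [k|[jj K]]; rewrite /tcf /=; first by rewrite pd_cst.
by rewrite pd_coord.
Qed.

Lemma dep_tcf' j w : depends_on [:: sh j w] (tcf (R:=R) j w).
Proof. by case: w => [k|[jj K]] //; apply: dep_coord. Qed.

Lemma dep_sum_seq S (s : seq V) (h : V -> F) :
  (forall k, k \in s -> depends_on S (h k)) ->
  depends_on S (fun z => \sum_(k <- s) h k z).
Proof. by move=> d z z' e; apply: eq_big_seq => k ks; exact: d. Qed.

Lemma dep_DT j S H : depends_on S H -> depends_on (S ++ map (sh j) S) (DT j (undup S) H).
Proof.
move=> dep; have sub : {subset S <= S ++ map (sh j) S} by move=> v vS; rewrite mem_cat vS.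
have hs : forall w, w \in undup S ->
    depends_on (S ++ map (sh j) S) (fun z => tcf j w z * pd w H z).
  move=> w; rewrite mem_undup => wS.
  apply: dep_mono (dep_mul (@dep_tcf' j w) (dep_pd w dep)) _ => v.
  rewrite mem_cat inE => /orP[/eqP ->|/sub //].
  by rewrite mem_cat map_f ?orbT.
have d := dep_add (dep_pd (inl j) dep) (dep_sum_seq hs).
rewrite /DT; apply: (dep_mono d) => v; rewrite mem_cat => /orP[/sub //|//].
Qed.

Lemma pd_DT u j T H : inA H -> pd u (DT j T H) = fun z => pd u (pd (inl j) H) z +
  \sum_(w <- T) (pd u (tcf j w) z * pd w H z + tcf j w z * pd u (pd w H) z).
Proof.
move=> hA; rewrite /DT pd_add; first last.
- by apply: dv_sum => w; apply: dv_mul; [apply: dv_A; apply: inA_tcf | apply: dv_A; apply: inA_pd].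
- by apply: dv_A; apply: inA_pd.
rewrite pd_sum; last first.
  by move=> w; apply: dv_mul; [apply: dv_A; apply: inA_tcf | apply: dv_A; apply: inA_pd].
apply/funext => z; congr (_ + _); apply: eq_bigr => w _.
by rewrite pd_mul //; [apply: dv_A; apply: inA_tcf | apply: dv_A; apply: inA_pd].
Qed.

Lemma sum_ind (W : seq V) (x : V) (f : V -> R) : uniq W -> x \in W ->
  \sum_(u <- W) f u * (u == x)%:R = f x.
Proof.
elim: W => // a W IH /= /andP[aW uW]; rewrite inE big_cons => /orP[/eqP ->|xW].
  rewrite eqxx mulr1 big_seq big1 ?addr0 // => u uW'.
  by case: eqP => [e|_]; [move: aW; rewrite -e uW' | rewrite mulr0].
rewrite IH //; case: eqP => [e|_]; first by move: aW; rewrite e xW.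
by rewrite mulr0 add0r.
Qed.

Definition NF i j S0 H (z : V -> R) :=
  pd (inl i) (pd (inl j) H) z
  + \sum_(w <- S0) tcf j w z * pd (inl i) (pd w H) z
  + \sum_(w <- S0) tcf i w z * pd w (pd (inl j) H) z
  + \sum_(w <- S0) tcf i (sh j w) z * pd w H z
  + \sum_(u <- S0) \sum_(w <- S0) tcf i u z * tcf j w z * pd u (pd w H) z.

Lemma NF_sym i j S H : Cinf S H -> NF i j (undup S) H = NF j i (undup S) H.
Proof.
move=> C; apply/funext => z; rewrite /NF.
have sum5 : forall x1 x2 x3 x4 x5 y1 y2 y3 y4 y5 : R, x1 = y1 -> x2 = y3 -> x3 = y2 ->
    x4 = y4 -> x5 = y5 -> x1 + x2 + x3 + x4 + x5 = y1 + y2 + y3 + y4 + y5.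
  by move=> x1 x2 x3 x4 x5 y1 y2 y3 y4 y5 -> -> -> -> ->; ring.
have E2 : \sum_(w <- undup S) tcf j w z * pd (inl i) (pd w H) z =
          \sum_(w <- undup S) tcf j w z * pd w (pd (inl i) H) z.
  by apply: eq_bigr => w _; rewrite (schwarz (inl i) w C).
have E3 : \sum_(w <- undup S) tcf i w z * pd w (pd (inl j) H) z =
          \sum_(w <- undup S) tcf i w z * pd (inl j) (pd w H) z.
  by apply: eq_bigr => w _; rewrite (schwarz w (inl j) C).
have E4 : \sum_(w <- undup S) tcf i (sh j w) z * pd w H z =
          \sum_(w <- undup S) tcf j (sh i w) z * pd w H z.
  by apply: eq_bigr => w _; rewrite tcf_sh.
have E5 : \sum_(u <- undup S) \sum_(w <- undup S) tcf i u z * tcf j w z * pd u (pd w H) z =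
          \sum_(u <- undup S) \sum_(w <- undup S) tcf j u z * tcf i w z * pd u (pd w H) z.
  rewrite exchange_big; apply: eq_bigr => u _; apply: eq_bigr => w _.
  by rewrite (schwarz w u C) [tcf i w z * _]mulrC.
exact: (sum5 _ _ _ _ _ _ _ _ _ _ (f_equal (fun f => f z) (schwarz (inl i) (inl j) C)) E2 E3 E4 E5).
Qed.

Lemma DT_DT_NF i j S H : Cinf S H ->
  let W := undup (S ++ map (sh i) S ++ map (sh j) S) in
  DT i W (DT j (undup S) H) = NF i j (undup S) H.
Proof.
move=> C W.
have hA : inA H by exists S.
case/CinfP: (C) => dep _.
have uW : uniq W by apply: undup_uniq.
have SW : {subset S <= W} by move=> v vS; rewrite mem_undup mem_cat vS.
have SW' : {subset undup S <= W} by move=> v; rewrite mem_undup; apply: SW.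
have sjW : forall w, w \in S -> sh j w \in W.
  by move=> w wS; rewrite mem_undup !mem_cat map_f ?orbT.
have US : {subset S <= undup S} by move=> v; rewrite mem_undup.
apply/funext => z; rewrite /DT pd_DT // /NF.
have E1 : \sum_(w <- undup S) (pd (inl i) (tcf j w) z * pd w H z + tcf j w z * pd (inl i) (pd w H) z)
   = \sum_(w <- undup S) tcf j w z * pd (inl i) (pd w H) z.
  apply: eq_bigr => w _; rewrite pd_tcf.
  by case: w => [k|[jj K]] /=; rewrite mul0r add0r.
rewrite E1.
have E2 : \sum_(u <- W) tcf i u z * pd u (DT j (undup S) H) z =
  \sum_(u <- undup S) tcf i u z * pd u (pd (inl j) H) z
  + \sum_(w <- undup S) tcf i (sh j w) z * pd w H z
  + \sum_(u <- undup S) \sum_(w <- undup S) tcf i u z * tcf j w z * pd u (pd w H) z.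
  rewrite (eq_bigr (fun u => tcf i u z * pd u (pd (inl j) H) z
      + \sum_(w <- undup S) tcf i u z * (pd u (tcf j w) z * pd w H z)
      + \sum_(w <- undup S) tcf i u z * tcf j w z * pd u (pd w H) z)); last first.
    move=> u _; rewrite pd_DT // mulrDr big_distrr /= -addrA -big_split /=.
    by congr (_ + _); apply: eq_bigr => w _; ring.
  rewrite !big_split /=.
  congr (_ + _ + _).
  - apply: (@sum_supp R p q S W (undup S) (fun u => tcf i u z * pd u (pd (inl j) H) z)) => //;
      last exact: undup_uniq.
    by move=> v vS; rewrite (pd_out (dep_pd (inl j) dep) vS) mulr0.
  - rewrite exchange_big; apply: eq_big_seq => w; rewrite mem_undup => wS.
    rewrite (eq_bigr (fun u => (tcf i u z * (isr w)%:R * pd w H z) * (u == sh j w)%:R)); last first.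
      by move=> u _; rewrite pd_tcf /= -mulnb natrM; ring.
    rewrite (sum_ind (fun u => tcf i u z * (isr w)%:R * pd w H z) uW (sjW w wS)).
    by case: w {wS} => [k|[jj K]] /=; rewrite ?mulr1 // mulr0 /tcf /= mul0r.
  - apply: (@sum_supp R p q S W (undup S)
      (fun u => \sum_(w <- undup S) tcf i u z * tcf j w z * pd u (pd w H) z)) => //;
      last exact: undup_uniq.
    move=> v vS; rewrite big1 // => w _.
    by rewrite (pd_out (dep_pd w dep) vS) mulr0.
have L : forall a b c x y w : R, c = x + y + w -> a + b + c = a + b + x + y + w.
  by move=> a b c x y w ->; ring.
exact: (L _ _ _ _ _ _ E2).
Qed.

Lemma Dtot_comm i j H : inA H -> Dtot i (Dtot j H) = Dtot j (Dtot i H).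
Proof.
move=> [S C]; have hA : inA H by exists S.
case/CinfP: (C) => dep _.
have US : {subset S <= undup S} by move=> v; rewrite mem_undup.
rewrite (Dtot_any j hA dep (undup_uniq S) US) (Dtot_any i hA dep (undup_uniq S) US).
pose Wij := undup (S ++ map (sh i) S ++ map (sh j) S).
pose Wji := undup (S ++ map (sh j) S ++ map (sh i) S).
have s1 : {subset S ++ map (sh j) S <= Wij}.
  by move=> v; rewrite mem_undup !mem_cat => /orP[->|->]; rewrite ?orbT.
have s2 : {subset S ++ map (sh i) S <= Wji}.
  by move=> v; rewrite mem_undup !mem_cat => /orP[->|->]; rewrite ?orbT.
rewrite (Dtot_any i (inA_DT j (undup S) hA) (@dep_DT j S H dep) (undup_uniq _) s1).
rewrite (Dtot_any j (inA_DT i (undup S) hA) (@dep_DT i S H dep) (undup_uniq _) s2).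
by rewrite !DT_DT_NF // NF_sym.
Qed.

End J5.


Section J6.
Variables (R : realType) (p q : nat).
Local Notation V := (Var p q).
Local Notation F := (jfun R p q).
Implicit Types (S T : seq V) (G H Y : F).

Definition fD (M : mi p) (s : seq 'I_p) (Y : F) : F :=
  foldr (fun i G => iter (M i) (Dtot i) G) Y s.

Lemma inA_iter i n Y : inA Y -> inA (iter n (Dtot i) Y).
Proof. by move=> hY; elim: n => //= n IH; apply: inA_Dtot. Qed.

Lemma inA_fD M s Y : inA Y -> inA (fD M s Y).
Proof. by move=> hY; elim: s => //= j s IH; apply: inA_iter. Qed.

Lemma iter_comm i j n G : inA G -> Dtot i (iter n (Dtot j) G) = iter n (Dtot j) (Dtot i G).
Proof.
move=> hG; elim: n => //= n IH.
by rewrite Dtot_comm ?IH //; apply: inA_iter.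
Qed.

Lemma fD_eq (M1 M2 : mi p) (s : seq 'I_p) Y : {in s, M1 =1 M2} -> fD M1 s Y = fD M2 s Y.
Proof.
elim: s => //= j s IH h; rewrite h ?inE ?eqxx // IH // => k ks.
by apply: h; rewrite inE ks orbT.
Qed.

Lemma fD_step i s M Y : uniq s -> i \in s -> inA Y ->
  fD (madd M (munit i)) s Y = Dtot i (fD M s Y).
Proof.
elim: s => // j s IH /= /andP[js us]; rewrite inE => /orP[/eqP ->|iS] hY.
  rewrite (fD_eq (M2 := M)); last first.
    move=> k ks; rewrite !ffunE; case: eqP => [e|_]; last by rewrite addn0.
    by move: js; rewrite -e ks.
  by rewrite !ffunE eqxx addn1.
have ji : j != i by apply: contraNneq js => ->.
rewrite IH // !ffunE (negbTE ji) addn0 iter_comm //.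
exact: inA_fD.
Qed.

Lemma Dmulti_fD K Y : Dmulti K Y = fD K (enum 'I_p) Y.
Proof. by []. Qed.

Lemma Dmulti_step i K Y : inA Y -> Dtot i (Dmulti K Y) = Dmulti (madd K (munit i)) Y.
Proof. by move=> hY; rewrite !Dmulti_fD fD_step ?enum_uniq ?mem_enum. Qed.

Lemma Dmulti_zero Y : Dmulti (mzero p) Y = Y.
Proof.
rewrite Dmulti_fD; elim: (enum 'I_p) => //= j s ->; by rewrite ffunE.
Qed.

Lemma Dmulti_unit i Y : inA Y -> Dmulti (munit i) Y = Dtot i Y.
Proof.
move=> hY; have -> : munit i = madd (mzero p) (munit i).
  by apply/ffunP => k; rewrite !ffunE.
by rewrite -Dmulti_step // Dmulti_zero.
Qed.

Lemma inA_Dmulti K Y : inA Y -> inA (Dmulti K Y).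
Proof. exact: inA_fD. Qed.

Section Ideal.
Variables (n : nat) (idx : 'I_n -> 'I_q) (J : 'I_n -> mi p) (P : 'I_n -> F).
Hypothesis PA : forall a, inA (P a).

Lemma inA_Delta a : inA (Delta idx J P a).
Proof. by apply: inA_sub; [apply: inA_coord | apply: PA]. Qed.

Local Notation I := (inI idx J P).

Lemma inI0 : I (fun _ => 0).
Proof.
exists 0%N, (fun _ => fun _ => 0), (fun _ => mzero p), (fun k : 'I_0 => False_rect _ (Bool.diff_false_true (ltn_ord k))).
by split=> //; [case | apply/funext => z; rewrite big_ord0].
Qed.

Lemma inI_term c L a : inA c -> I (fun z => c z * Dmulti L (Delta idx J P a) z).
Proof.
move=> hc; exists 1%N, (fun _ => c), (fun _ => L), (fun _ => a); split=> //.
by apply/funext => z; rewrite big_ord1.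
Qed.

Lemma inI_add G H : I G -> I H -> I (fun z => G z + H z).
Proof.
move=> [m1 [c1 [L1 [a1 [h1 ->]]]]] [m2 [c2 [L2 [a2 [h2 ->]]]]].
pose c (k : 'I_(m1 + m2)) := match fintype.split k with inl k1 => c1 k1 | inr k2 => c2 k2 end.
pose L (k : 'I_(m1 + m2)) := match fintype.split k with inl k1 => L1 k1 | inr k2 => L2 k2 end.
pose a (k : 'I_(m1 + m2)) := match fintype.split k with inl k1 => a1 k1 | inr k2 => a2 k2 end.
have sl : forall k : 'I_m1, fintype.split (lshift m2 k) = inl k.
  by move=> k; rewrite -[lshift m2 k]/(unsplit (inl k)) unsplitK.
have sr : forall k : 'I_m2, fintype.split (rshift m1 k) = inr k.
  by move=> k; rewrite -[rshift m1 k]/(unsplit (inr k)) unsplitK.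
exists (m1 + m2)%N, c, L, a; split.
  by move=> k; rewrite /c; case: (fintype.split k).
apply/funext => z; rewrite big_split_ord /=; congr (_ + _); apply: eq_bigr => k _.
  by rewrite /c /L /a sl.
by rewrite /c /L /a sr.
Qed.

Lemma inI_sum m (h : 'I_m -> F) : (forall k, I (h k)) -> I (fun z => \sum_(k < m) h k z).
Proof.
elim: m h => [|m IH] h hI; first by rewrite ord0_fun; apply: inI0.
rewrite ordS_fun; apply: inI_add => //.
exact: (IH (fun k => h (widen_ord (leqnSn m) k))).
Qed.

Lemma inI_mul c G : inA c -> I G -> I (fun z => c z * G z).
Proof.
move=> hc [m [c1 [L1 [a1 [h1 ->]]]]].
exists m, (fun k z => c z * c1 k z), L1, a1; split.
  by move=> k; apply: inA_mul.
by apply/funext => z; rewrite big_distrr; apply: eq_bigr => k _ /=; rewrite mulrA.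
Qed.

Lemma inI_opp G : I G -> I (fun z => - G z).
Proof.
move=> hG; have -> : (fun z => - G z) = (fun z => (fun _ => -1) z * G z).
  by apply/funext => z; rewrite mulN1r.
by apply: inI_mul => //; apply: inA_cst.
Qed.

Lemma inI_Dtot i G : I G -> I (Dtot i G).
Proof.
move=> [m [c [L [a [hc ->]]]]].
have hX : forall k, inA (Dmulti (L k) (Delta idx J P (a k))).
  by move=> k; apply: inA_Dmulti; apply: inA_Delta.
rewrite Dtot_sum; last by move=> k; apply: inA_mul.
apply: inI_sum => k; rewrite Dtot_mul // Dmulti_step; last exact: inA_Delta.
by apply: inI_add; apply: inI_term => //; apply: inA_Dtot.
Qed.

End Ideal.

End J6.


Section Main.
Variables (R : realType) (p q n : nat) (idx : 'I_n -> 'I_q) (J : 'I_n -> mi p)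
  (P : 'I_n -> jfun R p q).
Local Notation F := (jfun R p q).
Hypothesis PA : forall a, inA (P a).
Hypothesis Hex : forall Q : F, inA Q -> exists! Rf, is_reduced idx J P Q Rf.

Lemma inB_inA (G : F) : inB idx J G -> inA G.
Proof. by move=> [S [C _]]; exists S. Qed.

Lemma frakD_spec K (G : F) : inA (Dmulti K G) ->
  is_reduced idx J P (Dmulti K G) (frakD idx J P K G).
Proof.
move=> hA; have [Rf [hR _]] := Hex hA.
exact: (epsilon_spec (inhabits (fun _ => 0)) _ (ex_intro _ Rf hR)).
Qed.

Lemma frakD_eq K (G Rf : F) : inA (Dmulti K G) -> is_reduced idx J P (Dmulti K G) Rf ->
  frakD idx J P K G = Rf.
Proof.
move=> hA hG; have [R0 [hR uR]] := Hex hA.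
by rewrite -(uR _ (frakD_spec hA)) (uR _ hG).
Qed.

Lemma iter_claim j m (G H : F) : inB idx J G -> inA H -> inI idx J P (fun z => H z - G z) ->
  [/\ inB idx J (iter m (frakD idx J P (munit j)) G), inA (iter m (Dtot j) H) &
      inI idx J P (fun z => iter m (Dtot j) H z - iter m (frakD idx J P (munit j)) G z)].
Proof.
move=> hG hH hI; elim: m => [|m [IH1 IH2 IH3]] //=.
set G' := iter m _ G in IH1 IH3 *; set H' := iter m _ H in IH2 IH3 *.
have hG' := inB_inA IH1.
have [r1 r2] := frakD_spec (K := munit j) (inA_Dmulti (munit j) hG').
rewrite Dmulti_unit // in r2.
split=> //; first exact: inA_Dtot.
have e : (fun z => Dtot j H' z - frakD idx J P (munit j) G' z) =
  fun z => Dtot j (fun z => H' z + - G' z) z + (Dtot j G' z - frakD idx J P (munit j) G' z).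
  rewrite Dtot_add ?Dtot_opp //; last exact: inA_opp.
  by apply/funext => z; ring.
rewrite e; apply: inI_add => //.
exact: inI_Dtot.
Qed.

Lemma fold_claim (M : mi p) (G : F) : inB idx J G -> forall s,
  [/\ inB idx J (foldr (fun i G => iter (M i) (frakD idx J P (munit i)) G) G s),
      inA (fD M s G) &
      inI idx J P (fun z => fD M s G z - foldr (fun i G => iter (M i) (frakD idx J P (munit i)) G) G s z)].
Proof.
move=> hG; elim=> [|j s [IH1 IH2 IH3]] /=.
  split=> //; first exact: inB_inA.
  have -> : (fun z => G z - G z) = fun _ => 0 by apply/funext => z; rewrite subrr.
  exact: inI0.
exact: iter_claim.
Qed.

End Main.

Theorem corollary1 (R : realType) (p q n : nat) (idx : 'I_n -> 'I_q)
  (J : 'I_n -> mi p) (P : 'I_n -> jfun R p q)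
  (rk : 'I_q * mi p -> 'I_q * mi p -> Prop) :
  passive_orthonomic idx J P rk ->
  (* existence and uniqueness of reduced forms (stated in the context) *)
  (forall Q : jfun R p q, inA Q -> exists! Rf, is_reduced idx J P Q Rf) ->
  forall (K : mi p) (F : jfun R p q), inB idx J F ->
  frakD idx J P K F =
  foldr (fun i G => iter (K i) (frakD idx J P (munit i)) G) F (enum 'I_p).
Proof.
move=> [_ _ PB _ _] Hex K F hF.
have PA : forall a, inA (P a) by move=> a; apply: inB_inA (PB a).
have [h1 h2 h3] := fold_claim PA Hex K hF (enum 'I_p).
by apply: frakD_eq => //; split.
Qed.
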